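(* Let $\mathcal{M}\subseteq\mathbb{S}^n$. Then $\mathcal{T}(\mathcal{M})$ is rank-one generated if and only if for every nonzero $X\in\mathcal{T}(\mathcal{M})$ we have $\mathrm{range}(X)\cap\mathcal{N}(\mathcal{M})\neq\{0\}$.
   Context: $\mathbb{S}^n$ denotes real symmetric $n\times n$ matrices with $\langle A,B\rangle=\mathrm{tr}(AB)$, $\mathbb{S}^n_+$ the PSD cone. For $\mathcal{M}\subseteq\mathbb{S}^n$, $\mathcal{T}(\mathcal{M})=\{X\in\mathbb{S}^n_+:\langle M,X\rangle=0\ \forall M\in\mathcal{M}\}$ and $\mathcal{N}(\mathcal{M})=\{x\in\mathbb{R}^n:x^\top Mx=0\ \forall M\in\mathcal{M}\}$. A closed convex cone $\mathcal{S}\subseteq\mathbb{S}^n_+$ is rank-one generated (ROG) if $\mathcal{S}=\mathrm{conv}(\mathcal{S}\cap\{xx^\top:x\in\mathbb{R}^n\})$. *)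

(* Defs.v *)
From mathcomp Require Import all_boot all_order all_algebra.
From mathcomp Require Import boolp classical_sets reals.
Set Implicit Arguments. Unset Strict Implicit. Unset Printing Implicit Defensive.
Import Order.TTheory GRing.Theory Num.Theory.
Local Open Scope ring_scope.
Local Open Scope classical_set_scope.

Section Defs.
Variables (R : realType) (n : nat).

Definition sym_mx (A : 'M[R]_n) : Prop := A^T = A.

Definition frob (A B : 'M[R]_n) : R := \tr (A *m B).

Definition qform (A : 'M[R]_n) (x : 'cV[R]_n) : R := (x^T *m A *m x) 0 0.

Definition psd (A : 'M[R]_n) : Prop :=
  sym_mx A /\ forall x : 'cV[R]_n, 0 <= qform A x.

Definition Tset (Ms : set 'M[R]_n) : set 'M[R]_n :=
  [set X | psd X /\ forall M, Ms M -> frob M X = 0].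

Definition Nset (Ms : set 'M[R]_n) : set 'cV[R]_n :=
  [set x | forall M, Ms M -> qform M x = 0].

Definition rank_one_mats : set 'M[R]_n := [set x *m x^T | x in [set: 'cV[R]_n]].

Definition conv_hull (A : set 'M[R]_n) : set 'M[R]_n :=
  [set X | exists (k : nat) (lam : 'I_k -> R) (P : 'I_k -> 'M[R]_n),
      (forall i, 0 <= lam i) /\ \sum_(i < k) lam i = 1 /\
      (forall i, A (P i)) /\ X = \sum_(i < k) lam i *: P i].

Definition range_mx (X : 'M[R]_n) : set 'cV[R]_n :=
  [set v | exists y : 'cV[R]_n, v = X *m y].

Definition ROG (S : set 'M[R]_n) : Prop :=
  S = conv_hull (S `&` rank_one_mats).

End Defs.

(* Main.v *)
Require Import Defs.
From mathcomp Require Import all_boot all_order all_algebra.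
From mathcomp Require Import boolp classical_sets reals.
From mathcomp Require Import ring lra zify.
Import Order.TTheory GRing.Theory Num.Theory.
Local Open Scope ring_scope.
Local Open Scope classical_set_scope.

Section Aux.
Variables (R : realType) (n : nat).
Implicit Types (X Y M : 'M[R]_n) (x y z : 'cV[R]_n).

Lemma e11_mul (A B : 'M[R]_1) : (A *m B) 0 0 = A 0 0 * B 0 0.
Proof. by rewrite mxE big_ord1. Qed.

Lemma e11_tr (A : 'M[R]_1) : A^T 0 0 = A 0 0.
Proof. by rewrite mxE. Qed.

Lemma qform_rank1 x z : qform (x *m x^T) z = ((z^T *m x) 0 0) ^+ 2.
Proof.
rewrite /qform mulmxA -mulmxA e11_mul.
have -> : x^T *m z = (z^T *m x)^T by rewrite trmx_mul trmxK.
by rewrite e11_tr expr2.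
Qed.

Lemma frob_rank1 M x : frob M (x *m x^T) = qform M x.
Proof.
rewrite /frob /qform mulmxA mxtrace_mulC mulmxA /mxtrace big_ord1.
by [].
Qed.

Lemma qformD X Y z : qform (X + Y) z = qform X z + qform Y z.
Proof. by rewrite /qform mulmxDr mulmxDl mxE. Qed.
Lemma qformZ a X z : qform (a *: X) z = a * qform X z.
Proof. by rewrite /qform -scalemxAr -scalemxAl mxE. Qed.
Lemma qform0 z : qform 0 z = 0.
Proof. by rewrite /qform mulmx0 mul0mx mxE. Qed.
Lemma qform_sum k (F : 'I_k -> 'M[R]_n) z :
  qform (\sum_(i < k) F i) z = \sum_(i < k) qform (F i) z.
Proof.
elim: k F => [|k IH] F; first by rewrite !big_ord0 qform0.
by rewrite !big_ord_recr /= qformD IH.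
Qed.

Lemma frobD M X Y : frob M (X + Y) = frob M X + frob M Y.
Proof. by rewrite /frob mulmxDr mxtraceD. Qed.
Lemma frobZ M a X : frob M (a *: X) = a * frob M X.
Proof. by rewrite /frob -scalemxAr mxtraceZ. Qed.
Lemma frob0 M : frob M 0 = 0.
Proof. by rewrite /frob mulmx0 mxtrace0. Qed.
Lemma frob_sum M k (F : 'I_k -> 'M[R]_n) :
  frob M (\sum_(i < k) F i) = \sum_(i < k) frob M (F i).
Proof.
elim: k F => [|k IH] F; first by rewrite !big_ord0 frob0.
by rewrite !big_ord_recr /= frobD IH.
Qed.

Lemma qform_exp X z y t : sym_mx X ->
  qform X (z + t *: y) = qform X z + 2 * t * (z^T *m X *m y) 0 0 + t ^+ 2 * qform X y.
Proof.
move=> sX.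
have hs : (y^T *m X *m z) 0 0 = (z^T *m X *m y) 0 0.
  by rewrite -[LHS]e11_tr !trmx_mul trmxK sX mulmxA.
rewrite /qform.
have -> : (z + t *: y)^T = z^T + t *: y^T by rewrite linearD linearZ.
rewrite !mulmxDl !mulmxDr -?scalemxAr -?scalemxAl -?scalemxAl -?scalemxAr -?scalemxAl.
move: hs; move: (z^T *m X *m z) (z^T *m X *m y) (y^T *m X *m z) (y^T *m X *m y) => A B C D hs.
rewrite !mxE hs; ring.
Qed.

Lemma cs X z y : psd X ->
  ((z^T *m X *m y) 0 0) ^+ 2 <= qform X z * qform X y.
Proof.
case=> sX pX.
set a := qform X z; set b := (z^T *m X *m y) 0 0; set c := qform X y.
have H t : 0 <= a + 2 * t * b + t ^+ 2 * c by rewrite -qform_exp //; exact: pX.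
have c0 : 0 <= c by exact: pX.
have [cz|cp] := eqVneq c 0.
  have [bz|bn] := eqVneq b 0; first by rewrite bz cz expr0n /= mulr0.
  have := H (- (a + 1) / (2 * b)).
  rewrite cz mulr0 addr0.
  have -> : 2 * (- (a + 1) / (2 * b)) * b = - (a + 1).
    by field.
  by move=> h; exfalso; move: h; apply/negP; rewrite -ltNge; lra.
have cpos : 0 < c by rewrite lt0r cp c0.
have := H (- b / c).
have -> : a + 2 * (- b / c) * b + (- b / c) ^+ 2 * c = a - b ^+ 2 / c.
  by field.
rewrite subr_ge0 ler_pdivrMr //.
Qed.


Lemma sumsq0 (v : 'cV[R]_n) : (v^T *m v) 0 0 = 0 -> v = 0.
Proof.
rewrite mxE => h; apply/matrixP => i j; rewrite (ord1 j) mxE.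
have nn : forall k : 'I_n, true -> 0 <= v^T 0 k * v k 0.
  by move=> k _; rewrite mxE -expr2 sqr_ge0.
have := @psumr_eq0P _ _ _ (fun k => v^T 0 k * v k 0) nn h i isT.
rewrite mxE -expr2 => /eqP; rewrite sqrf_eq0 => /eqP ->.
by [].
Qed.

Lemma psd_ker X y : psd X -> qform X y = 0 -> X *m y = 0.
Proof.
move=> pX q0; have := @cs X (X *m y) y pX; rewrite q0 mulr0.
have sX : X^T = X by case: pX.
rewrite trmx_mul sX => h; apply: sumsq0.
have : ((y^T *m X *m X *m y) 0 0) ^+ 2 == 0 by rewrite eq_le h sqr_ge0.
by rewrite sqrf_eq0 trmx_mul sX !mulmxA => /eqP.
Qed.

Lemma psd_rank1 x : psd (x *m x^T).
Proof.
split; first by rewrite /sym_mx trmx_mul trmxK.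
by move=> z; rewrite qform_rank1 sqr_ge0.
Qed.

Lemma qformB X Y z : qform (X - Y) z = qform X z - qform Y z.
Proof. by rewrite -scaleN1r qformD qformZ mulN1r. Qed.
Lemma frobB M X Y : frob M (X - Y) = frob M X - frob M Y.
Proof. by rewrite -scaleN1r frobD frobZ mulN1r. Qed.

Lemma range_of_ker X x :
  (forall u : 'rV[R]_n, u *m X = 0 -> u *m x = 0) -> exists y, x = X *m y.
Proof.
move=> H.
pose B := row_mx X x.
have kB : (kermx X <= kermx B)%MS.
  apply/sub_kermxP; rewrite mul_mx_row mulmx_ker.
  have -> : kermx X *m x = 0.
    apply/row_matrixP => i; rewrite row_mul row0; apply: H.
    by rewrite -row_mul mulmx_ker row0.
  by rewrite row_mx0.
have rB : (\rank B <= \rank X)%N.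
  have := mxrankS kB; rewrite !mxrank_ker.
  have := rank_leq_row B; have := rank_leq_row X; lia.
have sXB : (X^T <= B^T)%MS by rewrite /B tr_row_mx -addsmxE addsmxSl.
have sBX : (B^T <= X^T)%MS.
  by rewrite -(geq_leqif (mxrank_leqif_sup sXB)) !mxrank_tr.
have : (x^T <= X^T)%MS.
  by apply: submx_trans sBX; rewrite /B tr_row_mx -addsmxE addsmxSr.
case/submxP => D hD; exists D^T.
by rewrite -[x]trmxK hD trmx_mul trmxK.
Qed.

Lemma Tset_rank1 Ms x : Nset Ms x -> Tset Ms (x *m x^T).
Proof. by move=> Nx; split; [exact: psd_rank1 | move=> M /Nx; rewrite frob_rank1]. Qed.

Lemma Tset_rank1_N Ms x : Tset Ms (x *m x^T) -> Nset Ms x.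
Proof. by case=> _ h M /h; rewrite frob_rank1. Qed.

Lemma hull_sub Ms : conv_hull (Tset Ms `&` rank_one_mats (R:=R) (n:=n)) `<=` Tset Ms.
Proof.
move=> X [k [lam [P [l0 [_ [hP ->]]]]]].
split; first split.
- rewrite /sym_mx raddf_sum; apply: eq_bigr => i _.
  change ((lam i *: P i)^T = lam i *: P i); rewrite linearZ /=.
  by case: (hP i) => [[[sP _] _] _]; rewrite sP.
- move=> z; rewrite qform_sum; apply: sumr_ge0 => i _; rewrite qformZ.
  by apply: mulr_ge0 => //; case: (hP i) => [[[_ pP] _] _]; exact: pP.
- move=> M HM; rewrite frob_sum big1 // => i _; rewrite frobZ.
  by case: (hP i) => [[_ fP] _]; rewrite fP // mulr0.
Qed.


Lemma scal_rank1 (a : R) x : (a *: x) *m (a *: x)^T = a ^+ 2 *: (x *m x^T).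
Proof. by rewrite linearZ /= -scalemxAl -scalemxAr scalerA -expr2. Qed.

Lemma Nset_scale Ms (a : R) x : Nset Ms x -> Nset Ms (a *: x).
Proof.
move=> Nx M HM; rewrite -frob_rank1 scal_rank1 frobZ frob_rank1 Nx //.
by rewrite mulr0.
Qed.

Lemma decomp Ms
  (H : forall X : 'M[R]_n, Tset Ms X -> X != 0 ->
     exists2 v : 'cV[R]_n, (range_mx X `&` Nset Ms) v & v != 0) r :
  forall X, (\rank X <= r)%N -> Tset Ms X ->
  exists s : seq 'cV[R]_n, (forall x, x \in s -> Nset Ms x) /\
     X = \sum_(x <- s) x *m x^T.
Proof.
elim: r => [|r IH] X hr TX.
  have : X == 0 by rewrite -mxrank_eq0 -leqn0.
  by move/eqP ->; exists [::]; split=> //; rewrite big_nil.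
have [->|nX] := eqVneq X 0.
  by exists [::]; split => //; rewrite big_nil.
have [v [[y vXy] Nv] vn] := H X TX nX.
case: (TX) => pX fX.
have sX : X^T = X by case: pX.
set c := qform X y.
have c0 : 0 <= c by case: pX => _; apply.
have cp : 0 < c.
  rewrite lt0r c0 andbT; apply/eqP => hc.
  by move: vn; rewrite vXy psd_ker // eqxx.
set a := Num.sqrt (c^-1).
set w := a *: v.
have ww : w *m w^T = c^-1 *: (v *m v^T).
  by rewrite /w scal_rank1 /a sqr_sqrtr // invr_ge0.
set Y := X - w *m w^T.
have vT : y^T *m X = v^T by rewrite vXy trmx_mul sX.
have TY : Tset Ms Y.
  split; first split.
  - rewrite /sym_mx /Y.
    change ((X - w *m w^T)^T = X - w *m w^T).
    by rewrite linearB /= trmx_mul trmxK sX.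
  - move=> z; rewrite /Y qformB ww qformZ qform_rank1.
    have := cs X z y pX.
    have -> : z^T *m v = z^T *m X *m y by rewrite vXy mulmxA.
    move: ((z^T *m X *m y) 0 0) => b h.
    by rewrite subr_ge0 mulrC ler_pdivrMr.
  - move=> M HM; rewrite /Y frobB ww frobZ frob_rank1 Nv // fX //.
    by rewrite mulr0 subr0.
have rY : (\rank Y < \rank X)%N.
  have k1 : (kermx X <= kermx Y)%MS.
    apply/sub_kermxP; rewrite /Y mulmxBr mulmx_ker ww -scalemxAr mulmxA.
    have -> : kermx X *m v = 0 by rewrite vXy mulmxA mulmx_ker mul0mx.
    by rewrite mul0mx scaler0 subr0.
  have k2 : (y^T <= kermx Y)%MS.
    apply/sub_kermxP; rewrite /Y mulmxBr vT ww -scalemxAr mulmxA.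
    have -> : y^T *m v = c%:M by rewrite [LHS]mx11_scalar vXy mulmxA.
    by rewrite mul_scalar_mx scalerA mulVf ?scale1r ?subrr // lt0r_neq0.
  have k3 : ~~ (y^T <= kermx X)%MS.
    by apply/negP => /sub_kermxP; rewrite vT => /eqP; rewrite trmx_eq0; apply/negP.
  have lt : (kermx X < kermx Y)%MS.
    rewrite ltmxE k1 /=; apply/negP => h; move/negP: k3; apply.
    exact: submx_trans k2 h.
  move: lt; rewrite ltmxErank k1 /= !mxrank_ker.
  have := rank_leq_row X; have := rank_leq_row Y; lia.
have [|s [Ns eY]] := IH Y _ TY; first by lia.
exists (w :: s); split.
  move=> x; rewrite inE => /orP [/eqP -> | /Ns //].
  exact: Nset_scale.
by rewrite big_cons -eY /Y addrC subrK.
Qed.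

End Aux.

Theorem corollary2p26 (R : realType) (n : nat) (Ms : set 'M[R]_n)
  (HMs : forall M, Ms M -> sym_mx M) :
  ROG (Tset Ms) <->
  (forall X : 'M[R]_n, Tset Ms X -> X != 0 ->
     exists2 v : 'cV[R]_n, (range_mx X `&` Nset Ms) v & v != 0).
Proof.
split.
- move=> rog X TX nX.
  have := TX; rewrite rog => -[k [lam [P [l0 [_ [hP eX]]]]]].
  have [i ni] : exists i, lam i *: P i != 0.
    case: (pselect (exists i, lam i *: P i != 0)) => // hn; exfalso.
    move/negP: nX; apply; apply/eqP; rewrite eX big1 // => i _.
    apply/eqP/negP => h'; apply: hn; exists i; exact/negP.
  case: (hP i) => [TP [x _ ePx]].
  exists x; last first.
    apply/negP => /eqP x0; move: ni; by rewrite -ePx x0 mul0mx scaler0 eqxx.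
  split; last by rewrite -ePx in TP; exact: Tset_rank1_N TP.
  apply: range_of_ker => u uX.
  have q : qform X u^T = 0 by rewrite /qform trmxK uX mul0mx mxE.
  move: q; rewrite eX qform_sum => q.
  have nn : forall j : 'I_k, true -> 0 <= qform (lam j *: P j) u^T.
    move=> j _; rewrite qformZ; apply: mulr_ge0 => //.
    by case: (hP j) => [[[_ pP] _] _]; exact: pP.
  have := @psumr_eq0P _ _ _ _ nn q i isT.
  rewrite qformZ -ePx qform_rank1 trmxK => /eqP; rewrite mulf_eq0 => /orP [/eqP l | ].
    by move: ni; rewrite l scale0r eqxx.
  rewrite sqrf_eq0 => /eqP h0.
  by apply/matrixP => a b; rewrite (ord1 a) (ord1 b) h0 mxE.
- move=> H; rewrite /ROG; apply/seteqP; split; last exact: hull_sub.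
  move=> X TX.
  have [s [Ns eX]] := @decomp R n Ms H (\rank X) X (leqnn _) TX.
  have T0 : Tset Ms (0 : 'M[R]_n).
    have := @Tset_rank1 R n Ms 0; rewrite mul0mx; apply.
    by move=> M _; rewrite /qform mulmx0 mxE.
  have [k0|kn] := eqVneq (size s) 0%N.
    move: eX; rewrite (size0nil k0) big_nil => ->.
    exists 1%N, (fun=> 1), (fun=> 0); split; first by [].
    split; first by rewrite big_ord1.
    split; last by rewrite big_ord1 scale1r.
    move=> _; split => //; exists 0 => //; by rewrite mul0mx.
  set k := size s.
  pose xs i := Num.sqrt (k%:R : R) *: nth 0 s i.
  have kR : (k%:R : R) != 0 by rewrite pnatr_eq0.
  have exs i : xs i *m (xs i)^T = k%:R *: (nth 0 s i *m (nth 0 s i)^T).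
    by rewrite /xs scal_rank1 sqr_sqrtr // ler0n.
  exists k, (fun=> (k%:R)^-1), (fun i => xs i *m (xs i)^T).
  split; first by move=> i; rewrite invr_ge0 ler0n.
  split; first by rewrite sumr_const card_ord -[_ *+ k]mulr_natr mulVf.
  split.
    move=> i; split; last by exists (xs i).
    apply: Tset_rank1; apply: Nset_scale; apply: Ns; apply: mem_nth.
    exact: ltn_ord.
  rewrite eX (big_nth 0) big_mkord; apply: eq_bigr => i _.
  by rewrite exs scalerA mulVf // scale1r.
Qed.
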